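(* Let $(M,d)$ be a separable metric space, $(\Omega,\mathscr{F},\mathbb{P},\theta)$ an ergodic measure-preserving dynamical system, and $\{f_\omega\}_{\omega\in\Omega}$ a family of paracontraction maps $f_\omega\colon M\to M$ with $(\omega,x)\mapsto f_\omega(x)$ measurable, and let $\varphi(n,\omega,x)=f_{\theta^{n-1}(\omega)}\circ\cdots\circ f_\omega(x)$. Let $C_\varphi=\{x\in M\colon \mathbb{P}(\{\omega\colon f_\omega(x)=x\})=1\}$ and assume $C_\varphi\neq\emptyset$. Assume moreover that for each set $U$ in some countable basis of the topology of $M$, the set $\{\omega\colon f_\omega(x)\ne x\text{ for all }x\in U\}$ is measurable. Then every $\varphi$-invariant measure $\mu$ satisfies $\mu(\Omega\times C_\varphi)=1$.
   Context: A continuous map $f\colon M\to M$ is a paracontraction if for every fixed point $x$ of $f$ and every $y$ not fixed by $f$, $d(f(y),x)<d(y,x)$. The skew product induced by $\varphi$ is $F(\omega,x)=(\theta(\omega),f_\omega(x))$. A random measure is a probability measure on $\Omega\times M$ with first marginal $\mathbb{P}$; a $\varphi$-invariant measure is a random measure invariant under $F$. An ergodic measure-preserving dynamical system is a probability space with a measurable measure-preserving map $\theta$ such that every measurable $A$ with $\theta^{-1}(A)\subset A$ has measure $0$ or $1$. *)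

(* Defs.v *)
From HB Require Import structures.
From mathcomp Require Import all_boot all_order all_algebra.
From mathcomp Require Import all_classical all_reals all_analysis.
Set Implicit Arguments. Unset Strict Implicit. Unset Printing Implicit Defensive.
Import Order.TTheory GRing.Theory Num.Theory.
Local Open Scope classical_set_scope.
Local Open Scope ring_scope.

Definition is_metric {R : realType} {M : Type} (dist : M -> M -> R) : Prop :=
  [/\ forall x y, 0 <= dist x y,
      forall x y, dist x y = 0 <-> x = y,
      forall x y, dist x y = dist y x &
      forall x y z, dist x z <= dist x y + dist y z].

Definition metric_open {R : realType} {M : Type} (dist : M -> M -> R)
  (U : set M) : Prop :=
  forall x, U x -> exists2 e : R, 0 < e & forall y, dist x y < e -> U y.

Definition metric_separable {R : realType} {M : Type} (dist : M -> M -> R) : Prop :=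
  exists D : set M, countable D /\
    forall x (e : R), 0 < e -> exists2 q, D q & dist x q < e.

Definition metric_basis {R : realType} {M : Type} (dist : M -> M -> R)
  (B : set (set M)) : Prop :=
  (forall U, B U -> metric_open dist U) /\
  (forall U, metric_open dist U -> forall x, U x -> exists2 V, B V & V x /\ V `<=` U).

Definition metric_continuous {R : realType} {M : Type} (dist : M -> M -> R)
  (f : M -> M) : Prop :=
  forall x (e : R), 0 < e -> exists2 del : R, 0 < del &
    forall y, dist x y < del -> dist (f x) (f y) < e.

Definition paracontraction {R : realType} {M : Type} (dist : M -> M -> R)
  (f : M -> M) : Prop :=
  metric_continuous dist f /\
  forall x y, f x = x -> f y <> y -> dist (f y) x < dist y x.

Definition ergodic_mpds {dO : measure_display} {R : realType}
  {Omega : measurableType dO} (P : probability Omega R) (theta : Omega -> Omega) : Prop :=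
  [/\ measurable_fun setT theta,
      (forall A, measurable A -> P (theta @^-1` A) = P A) &
      (forall A, measurable A -> theta @^-1` A `<=` A ->
         P A = 0%E \/ P A = 1%E)].

Definition skew_product {Omega M : Type} (theta : Omega -> Omega)
  (f : Omega -> M -> M) (p : Omega * M) : Omega * M :=
  (theta p.1, f p.1 p.2).

Definition random_measure {dO dM : measure_display} {R : realType}
  {Omega : measurableType dO} {M : measurableType dM}
  (P : probability Omega R) (mu : probability (Omega * M)%type R) : Prop :=
  forall A, measurable A -> mu (A `*` setT) = P A.

Definition phi_invariant {dO dM : measure_display} {R : realType}
  {Omega : measurableType dO} {M : measurableType dM}
  (P : probability Omega R) (theta : Omega -> Omega) (f : Omega -> M -> M)
  (mu : probability (Omega * M)%type R) : Prop :=
  random_measure P mu /\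
  forall S, measurable S -> mu (skew_product theta f @^-1` S) = mu S.

Definition C_phi {dO : measure_display} {R : realType} {Omega : measurableType dO}
  {M : Type} (P : probability Omega R) (f : Omega -> M -> M) : set M :=
  [set x | P [set w | f w x = x] = 1%E].

(* Main.v *)
Require Import Defs.
From mathcomp Require Import all_boot all_order all_algebra.
From mathcomp Require Import all_classical all_reals all_analysis.
From mathcomp Require Import lra.
Import Order.TTheory GRing.Theory Num.Theory.
Local Open Scope classical_set_scope.
Local Open Scope ring_scope.

Lemma mpre_aux d1 d2 (T1 : measurableType d1) (T2 : measurableType d2)
  (g : T1 -> T2) (S : set T2) :
  measurable_fun setT g -> measurable S -> measurable (g @^-1` S).
Proof. by move=> mg mS; rewrite -[X in measurable X]setTI; exact: mg. Qed.
Arguments mpre_aux {d1 d2 T1 T2 g S}.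

Lemma pfin_aux d (T : measurableType d) (R : realType) (P : probability T R)
  (A : set T) : measurable A -> P A \is a fin_num.
Proof.
move=> mA; rewrite ge0_fin_numE ?measure_ge0 //.
exact: (le_lt_trans (probability_le1 P mA) (ltry 1)).
Qed.
Arguments pfin_aux {d T R P A}.

Lemma iter_pres d (T : measurableType d) (R : realType) (P : probability T R)
  (g : T -> T) : measurable_fun setT g ->
  (forall S, measurable S -> P (g @^-1` S) = P S) ->
  forall n S, measurable S -> P (iter n g @^-1` S) = P S.
Proof.
move=> mg hg; elim=> [|n IH] S mS //=.
rewrite (_ : iter n.+1 g @^-1` S = iter n g @^-1` (g @^-1` S)) //.
by rewrite IH ?hg //; exact: mpre_aux.
Qed.
Arguments iter_pres {d T R P g}.

Lemma iter_meas d (T : measurableType d) (g : T -> T) :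
  measurable_fun setT g -> forall n, measurable_fun setT (iter n g).
Proof.
move=> mg; elim=> [|n IH] /=; first exact: measurable_id.
exact: measurableT_comp mg IH.
Qed.
Arguments iter_meas {d T g}.

Theorem mainTheorem7 (R : realType)
  (dO : measure_display) (Omega : measurableType dO) (P : probability Omega R)
  (theta : Omega -> Omega)
  (dM : measure_display) (M : measurableType dM) (dist : M -> M -> R)
  (f : Omega -> M -> M) :
  is_metric dist ->
  metric_separable dist ->
  (@measurable dM M) = <<s metric_open dist >> ->
  ergodic_mpds P theta ->
  (forall w, paracontraction dist (f w)) ->
  measurable_fun setT (fun p : Omega * M => f p.1 p.2) ->
  C_phi P f !=set0 ->
  (exists B : set (set M), [/\ countable B, metric_basis dist B &
     forall U, B U -> measurable [set w | forall x, U x -> f w x <> x]]) ->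
  forall mu : probability (Omega * M)%type R,
    phi_invariant P theta f mu ->
    mu (setT `*` C_phi P f) = 1%E.
Proof.
move=> [d0 deq dsym dtri] _ hmeas [mth thP thE] hpara mf [c Cc]
  [B [cB [bB1 bB2] mA]] mu [rmu inv].
set F := skew_product theta f.
have op_meas : forall U, metric_open dist U -> measurable U.
  by move=> U oU; rewrite hmeas; exact: sub_sigma_algebra.
have mS : forall x, measurable [set w | f w x = x].
  move=> x.
  have mfx : measurable_fun setT (fun w => f w x).
    exact: (measurable_fun_pair1 x mf).
  have ms : measurable [set x].
    rewrite -(setCK [set x]); apply: measurableC; apply: op_meas.
    move=> y /= yx; exists (dist y x).
      by rewrite lt_neqAle d0 andbT eq_sym; apply/eqP => /deq.
    by move=> z yz zx; rewrite zx in yz; rewrite ltxx in yz.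
  exact: (mpre_aux mfx ms).
have mF : measurable_fun setT F.
  apply: measurable_fun_pair => //=; exact: measurableT_comp mth measurable_fst.
have invn := iter_pres mF inv.
have thn := iter_pres mth thP.
have mFn := iter_meas mF.
have mthn := iter_meas mth.
have inv' : forall S, measurable S -> mu (F @^-1` S) = mu S := inv.
have PN : P (~` [set w | f w c = c]) = 0%E.
  by rewrite probability_setC ?mS // Cc subee.
have muN : mu (~` [set w | f w c = c] `*` setT) = 0%E.
  by rewrite rmu ?PN //; apply: measurableC.
have hdec : forall w x, f w c = c -> dist (f w x) c <= dist x c.
  move=> w x fc; have [fx|fx] := pselect (f w x = x); first by rewrite fx.
  exact/ltW/((hpara w).2 c x fc fx).
pose L (q : rat) := [set: Omega] `*` [set x | dist x c <= ratr q].
have mL : forall q, measurable (L q).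
  move=> q; apply: measurableX => //.
  rewrite -(setCK [set x | _]); apply: measurableC; apply: op_meas.
  move=> y /= /negP; rewrite -ltNge => hy; exists (dist y c - ratr q).
    by rewrite subr_gt0.
  move=> z hz /=; apply/negP; rewrite -ltNge.
  have := dtri y z c; lra.
have muD : forall q, mu (F @^-1` L q `\` L q) = 0%E.
  move=> q.
  have mFL : measurable (F @^-1` L q) := mpre_aux mF (mL q).
  have h1 : mu (F @^-1` L q) = mu (F @^-1` L q `\` L q) + mu (F @^-1` L q `&` L q).
    by apply: measureDI.
  have h2 : mu (L q) = mu (L q `\` F @^-1` L q) + mu (L q `&` F @^-1` L q).
    by apply: measureDI.
  have h3 : mu (L q `\` F @^-1` L q) = 0%E.
    apply/eqP; rewrite -measure_le0 -muN; apply: le_measure; rewrite ?inE.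
    - exact: measurableD.
    - by apply: measurableX => //; apply: measurableC.
    move=> [w x] [Lp nFLp]; split => //= fc; apply: nFLp; split => //=.
    exact: le_trans (hdec w x fc) Lp.2.
  rewrite inv' // in h1; rewrite h3 add0e setIC in h2.
  have fI : mu (F @^-1` L q `&` L q) \is a fin_num.
    by apply: pfin_aux; apply: measurableI.
  by rewrite -[LHS](addeK _ fI) -h1 h2 subee.
pose qn (n : nat) : rat := odflt 0 (unpickle n).
have hZ : exists Z, [/\ measurable Z, mu Z = 0%E & forall p, ~ Z p -> f p.1 p.2 = p.2].
  have neg : mu.-negligible ((~` [set w | f w c = c] `*` setT) `|`
      \bigcup_n (F @^-1` L (qn n) `\` L (qn n))).
    apply: negligibleU.
      apply/negligibleP => //; apply: measurableX => //; exact: measurableC.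
    apply: negligible_bigcup => n; apply/negligibleP; last exact: muD.
    by apply: measurableD => //; apply: mpre_aux.
  case: neg => Z [mZ Z0 sZ]; exists Z; split => // -[w x] nZ /=.
  have [//|fx] := pselect (f w x = x); exfalso; apply: nZ; apply: sZ.
  have [fc|fc] := pselect (f w c = c); last by left.
  right; have lt := (hpara w).2 c x fc fx.
  have [q] := rat_in_itvoo lt; rewrite in_itv /= => /andP[q1 q2].
  exists (pickle q) => //; rewrite /qn pickleK /=; split.
    by split => //=; apply: ltW.
  by move=> [_ /= /(lt_le_trans q2)]; rewrite ltxx.
case: hZ => Z [mZ Z0 nZ].
pose Y := \bigcup_n (iter n F @^-1` Z).
have negY : mu.-negligible Y.
  apply: negligible_bigcup => n; apply/negligibleP; first exact: mpre_aux (mFn n) mZ.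
  exact: (etrans (invn n Z mZ) Z0).
have itF : forall w x, ~ Y (w, x) -> forall n, iter n F (w, x) = (iter n theta w, x).
  move=> w x nY; elim => [//|n IH] /=.
  have hz : ~ Z (iter n F (w, x)) by move=> hz; apply: nY; exists n.
  have := nZ _ hz; rewrite IH /= => h.
  by rewrite /F /skew_product /= h.
have good : forall w x, ~ Y (w, x) -> forall n, f (iter n theta w) x = x.
  move=> w x nY n; have hz : ~ Z (iter n F (w, x)) by move=> hz; apply: nY; exists n.
  by have := nZ _ hz; rewrite itF.
case/countable_injP: cB => fB fBinj.
pose e n : set M := match pselect (exists U, B U /\ fB U = n) with
  | left h => proj1_sig (cid h) | right _ => set0 end.
have he1 : forall U, B U -> e (fB U) = U.
  move=> U BU; rewrite /e; destruct (pselect _) as [h0|h0]; last by exfalso; apply: h0; exists U.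
  by case: cid => V [BV fV] /=; apply: fBinj => //; rewrite inE.
have he2 : forall n, e n = set0 \/ B (e n).
  move=> n; rewrite /e; case: (pselect (exists U, B U /\ fB U = n)) => [zz|zz]; [right; exact: (proj2_sig (cid zz)).1 | by left].

have eopen : forall n, metric_open dist (e n).
  by move=> n; case: (he2 n) => [->|]; [move=> x [] | apply: bB1].
have emeas : forall n, measurable (e n) by move=> n; apply: op_meas.
pose A n := [set w | forall x, e n x -> f w x <> x].
have mAn : forall n, measurable (A n).
  move=> n; case: (he2 n) => h; last exact: mA.
  rewrite /A h (_ : [set w | _] = setT) //.
  by apply/seteqP; split => // w _ x [].
pose E n := \bigcup_k (iter k theta @^-1` A n).
have mE : forall n, measurable (E n).
  by move=> n; apply: bigcupT_measurable => k; apply: mpre_aux.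
have E01 : forall n, P (E n) = 0%E \/ P (E n) = 1%E.
  move=> n; apply: thE => // w [k _ hk]; exists k.+1 => //.
  by change (A n (iter k.+1 theta w)); rewrite iterSr.
pose bad n := P (E n) = 1%E.
have negbad : forall n, bad n -> mu.-negligible (setT `*` e n).
  move=> n bn.
  have h : mu.-negligible (Y `|` (~` E n `*` setT)).
    apply: negligibleU => //.
    apply/negligibleP; first by apply: measurableX => //; apply: measurableC.
    apply: (etrans (rmu _ (measurableC (mE n)))).
    by rewrite probability_setC ?bn ?subee.
  apply: negligibleS h => -[w x] [_ ex].
  have [y|ny] := pselect (Y (w, x)); [by left | right; split => //= hE].
  by case: hE => k _ hk; exact: hk x ex (good w x ny k).
pose Wn n := if pselect (bad n) then e n else set0.
pose W := \bigcup_n Wn n.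
have mW : measurable W.
  apply: bigcupT_measurable => n; rewrite /Wn; case: pselect => zz; [exact: emeas | exact: measurable0].
have negW : mu.-negligible (setT `*` W).
  have h : mu.-negligible (\bigcup_n (setT `*` Wn n)).
    apply: negligible_bigcup => n; rewrite /Wn; case: pselect => [bn|zz].
      exact: negbad.
    rewrite setX0; exact: negligible_set0.
  by apply: negligibleS h => -[w x] [_ [n _ hn]]; exists n.
have CW : C_phi P f = ~` W.
  apply/seteqP; split => x.
  - move=> Cx [n _]; rewrite /Wn; case: pselect => // bn ex.
    have negE : P.-negligible (E n).
      have h : P.-negligible (\bigcup_k (iter k theta @^-1` ~` [set w | f w x = x])).
        apply: negligible_bigcup => k; apply/negligibleP.
          by apply: mpre_aux => //; apply: measurableC.
        apply: (etrans (thn k _ (measurableC (mS x)))).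
        by rewrite probability_setC ?Cx ?subee.
      by apply: negligibleS h => w [k _ hk]; exists k => //; exact: hk x ex.
    have hPE : P (E n) = 0%E := measure_negligible (mE n) negE.
    move: hPE; rewrite bn => /eqP.
    by rewrite onee_eq0.
  - move=> nW; rewrite /C_phi /=.
    have negS : P.-negligible (~` [set w | f w x = x]).
      have h : P.-negligible (\bigcup_n (if pselect (e n x) then E n else set0)).
        apply: negligible_bigcup => n; case: pselect => [ex|zz]; last exact: negligible_set0.
        apply/negligibleP => //; case: (E01 n) => // bn; exfalso; apply: nW.
        by exists n => //; rewrite /Wn; case: pselect.
      apply: negligibleS h => w /= fx.
      have e0 : 0 < dist (f w x) x.
        by rewrite lt_neqAle d0 andbT eq_sym; apply/eqP => /deq.
      have [del del0 hdel] := (hpara w).1 x (dist (f w x) x / 2) (divr_gt0 e0 (ltr0Sn _ 1)).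
      pose r := Num.min del (dist (f w x) x / 2).
      have r0 : 0 < r by rewrite /r lt_min del0 /= divr_gt0.
      have ballo : metric_open dist [set y | dist x y < r].
        move=> z hz; exists (r - dist x z); first by rewrite subr_gt0.
        move=> y hy /=; have := dtri x z y; lra.
      have [V BV [Vx Vsub]] : exists2 V, B V & V x /\ V `<=` [set y | dist x y < r].
        by apply: bB2 => //=; rewrite (deq x x).2.
      exists (fB V) => //; rewrite he1 //; case: pselect => // zz.
      exists 0%N => //=; rewrite /A he1 // => y Vy fy.
      have hy := Vsub y Vy; move: hy; rewrite /= lt_min => /andP[hy1 hy2].
      have := hdel y hy1; rewrite fy => h1.
      have := dtri (f w x) y x; rewrite (dsym y x); lra.
    rewrite -(setCK [set w | f w x = x]) probability_setC; last by apply: measurableC.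
    by rewrite (measure_negligible _ negS) ?sube0 //; apply: measurableC.
have eqC : [set: Omega] `*` C_phi P f = ~` ([set: Omega] `*` W).
  rewrite CW; apply/seteqP; split => -[w x] /=.
    by move=> [_ nW] [_ hW]; exact: nW hW.
  by move=> h; split => // hW; apply: h.
transitivity (mu (~` ([set: Omega] `*` W))); first by apply: f_equal; exact: eqC.
have mTW : measurable ([set: Omega] `*` W) by apply: measurableX.
by rewrite probability_setC ?(measure_negligible mTW negW) ?sube0.
Qed.
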